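(* Let $k\ge 2$ be a power of $2$ and let $S$ be a subset of $\mathbb F_k^2$. Then there exists $\mathbf u\in\mathbb F_k^2$ such that for every subset $Z\subseteq\mathbb F_k$ with exactly $k/2$ elements, \[|\{\mathbf s\in S:\mathbf s\cdot\mathbf u\in Z\}|\le\frac{|S|+k^{1.5}}{2}.\]
   Context: $\mathbb F_k$ is the finite field with $k$ elements, and for $\mathbf s=(s_1,s_2),\mathbf u=(u_1,u_2)\in\mathbb F_k^2$, $\mathbf s\cdot\mathbf u=s_1u_1+s_2u_2\in\mathbb F_k$. *)

(* Defs.v *)
From HB Require Import structures.
From mathcomp Require Import all_boot all_order all_algebra all_field.
From mathcomp Require Import reals.
Set Implicit Arguments. Unset Strict Implicit. Unset Printing Implicit Defensive.
Import Order.TTheory GRing.Theory Num.Theory.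
Local Open Scope ring_scope.

Definition dot2 (F : fieldType) (s u : F * F) : F := s.1 * u.1 + s.2 * u.2.

(* Main.v *)
Require Import Defs.
From HB Require Import structures.
From mathcomp Require Import all_boot all_order all_algebra all_field.
From mathcomp Require Import reals ring lra zify.
Import Order.TTheory GRing.Theory Num.Theory.
Local Open Scope ring_scope.


Lemma cs (R : realDomainType) (I : finType) (P : pred I) (x : I -> R) :
  (\sum_(i | P i) x i) ^+ 2 <= #|P|%:R * \sum_(i | P i) x i ^+ 2.
Proof.
set X := \sum_(i | P i) x i; set Y := \sum_(i | P i) x i ^+ 2.
have H : 0 <= \sum_(i | P i) \sum_(j | P j) (x i - x j) ^+ 2.
  by apply: sumr_ge0 => i _; apply: sumr_ge0 => j _; exact: sqr_ge0.
have E : \sum_(i | P i) \sum_(j | P j) (x i - x j) ^+ 2 =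
   \sum_(i | P i) (#|P|%:R * x i ^+ 2 + Y - (x i * X) *+ 2).
  apply: eq_bigr => i _.
  rewrite (eq_bigr (fun j => x i ^+ 2 + x j ^+ 2 - (x i * x j) *+ 2)); last by move=> j _; ring.
  by rewrite sumrB big_split /= sumr_const sumrMnl -mulr_sumr -/X -/Y -[x i ^+ 2 *+ _]mulr_natl.
rewrite E sumrB big_split /= sumr_const in H.
rewrite sumrMnl -mulr_sumr -mulr_suml -/X -/Y -[Y *+ _]mulr_natl mulr2n in H.
rewrite expr2. lra.
Qed.


Lemma sum_eqind (T : finType) (A : pred T) (c : T) :
  (\sum_(t | A t) ((c == t) : nat) = A c)%N.
Proof.
rewrite big_mkcond (bigD1 c) //= eqxx big1 ?addn0; first by case: (A c).
by move=> t ne; rewrite eq_sym (negPf ne); case: (A t).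
Qed.

Lemma sum_ind_card (T : finType) (A : pred T) (b : pred T) :
  (\sum_(s | A s) (b s : nat) = #|[set s | A s & b s]|)%N.
Proof.
rewrite -sum1_card big_mkcond [RHS]big_mkcond /=; apply: eq_bigr => i _.
by rewrite inE; case: (A i); case: (b i).
Qed.

Lemma lin_eq (F : fieldType) (a b x y : F) : b != 0 ->
  (a * x + b * y == 0) = (y == - (a * x) / b).
Proof.
move=> bnz; apply/eqP/eqP => [h|->]; last by field.
rewrite (_ : y = (a * x + b * y - a * x) / b); first by rewrite h sub0r.
by field.
Qed.

Section Comb.
Variables (F : finFieldType) (S : {set F * F}).

Definition fib (u : F * F) (t : F) : nat := (\sum_(s in S) (dot2 s u == t))%N.
Definition Qf (u : F * F) : nat := (\sum_t (fib u t) ^ 2)%N.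

Lemma count_fib u (Z : {set F}) :
  #|[set s in S | dot2 s u \in Z]| = (\sum_(t in Z) fib u t)%N.
Proof.
rewrite /fib exchange_big /=.
rewrite (eq_bigr (fun s => (dot2 s u \in Z) : nat)); last first.
  by move=> s _; rewrite (@sum_eqind _ (fun t => t \in Z)).
by rewrite sum_ind_card.
Qed.

Lemma sum_fib u : (\sum_t fib u t)%N = #|S|.
Proof.
rewrite /fib exchange_big /=.
rewrite (eq_bigr (fun s => 1%N)); last by move=> s _; rewrite sum_eqind.
by rewrite sum1_card.
Qed.

Lemma Qf_pairs u :
  Qf u = (\sum_(s in S) \sum_(s' in S) (dot2 s u == dot2 s' u))%N.
Proof.
rewrite /Qf /fib.
rewrite (eq_bigr (fun t => \sum_(s in S) \sum_(s' in S)
   ((dot2 s u == t) * (dot2 s' u == t)))%N); last first.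
  by move=> t _; rewrite expnS expn1 big_distrlr.
rewrite exchange_big /=; apply: eq_bigr => s _.
rewrite exchange_big /=; apply: eq_bigr => s' _.
rewrite (bigD1 (dot2 s u)) //= eqxx mul1n big1 ?addn0; first by rewrite eq_sym.
by move=> t ne; rewrite eq_sym (negPf ne).
Qed.

Lemma count_dir (s s' : F * F) :
  (\sum_(v : F * F) ((dot2 s v == dot2 s' v) : nat) <= #|F| + (s == s') * (#|F| * #|F|))%N.
Proof.
case: (eqVneq s s') => [->|ne].
  rewrite mul1n; apply: leq_trans (leq_addl _ _).
  apply: leq_trans (_ : \sum_(v : F * F) 1 <= _)%N.
    by apply: leq_sum => v _; case: (_ == _).
  by rewrite sum1_card card_prod.
rewrite mul0n addn0.
set w1 := s.1 - s'.1; set w2 := s.2 - s'.2.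
have E : forall v : F * F, (dot2 s v == dot2 s' v) = (w1 * v.1 + w2 * v.2 == 0).
  by move=> v; rewrite -subr_eq0 /dot2 /w1 /w2; congr (_ == 0); ring.
rewrite (eq_bigr (fun v => ((w1 * v.1 + w2 * v.2 == 0) : nat))); last by move=> v _; rewrite E.
rewrite -(pair_bigA _ (fun x y => ((w1 * x + w2 * y == 0) : nat))) /=.
case: (eqVneq w2 0) => [w20|w2nz].
  have w1nz : w1 != 0.
    apply: contra ne => /eqP w10; apply/eqP.
    move: w10 w20; rewrite /w1 /w2 => /eqP; rewrite subr_eq0 => /eqP h1 /eqP.
    rewrite subr_eq0 => /eqP h2.
    by rewrite [s]surjective_pairing [s']surjective_pairing h1 h2.
  rewrite exchange_big /=.
  rewrite (eq_bigr (fun _ => 1%N)); first by rewrite sum1_card.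
  move=> y _.
  rewrite (eq_bigr (fun x => ((0 == x) : nat))) ?sum_eqind // => x _.
  by rewrite w20 mul0r addr0 mulf_eq0 (negPf w1nz) eq_sym.
rewrite (eq_bigr (fun _ => 1%N)); first by rewrite sum1_card.
move=> x _.
rewrite (eq_bigr (fun y => ((- (w1 * x) / w2 == y) : nat))); last first.
  by move=> y _; rewrite lin_eq // eq_sym.
by rewrite sum_eqind.
Qed.

End Comb.
Arguments fib {F}. Arguments Qf {F}. Arguments Qf_pairs {F}. Arguments count_fib {F}. Arguments sum_fib {F}. Arguments count_dir {F}.

Lemma cs_set (R : realDomainType) (I : finType) (A : {set I}) (x : I -> R) :
  (\sum_(i in A) x i) ^+ 2 <= #|A|%:R * \sum_(i in A) x i ^+ 2.
Proof. by move: (@cs R I (fun i => i \in A) x); rewrite (@eq_card _ _ A). Qed.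

Theorem mainTheorem2 (R : realType) (F : finFieldType) (k : nat)
  (hk2 : (2 <= k)%N) (hpow : exists m : nat, k = (2 ^ m)%N) (hF : #|F| = k)
  (S : {set F * F}) :
  exists u : F * F, forall Z : {set F}, #|Z| = (k %/ 2)%N ->
    (#|[set s in S | dot2 s u \in Z]|%:R : R)
      <= (#|S|%:R + k%:R * Num.sqrt (k%:R)) / 2.
Proof.
have [m km] := hpow.
set h := (k %/ 2)%N.
have kh : k = (h * 2)%N.
  rewrite /h km; case: m km => [|m] km; first by rewrite km in hk2.
  by rewrite expnSr mulnK.
have kpos : (0 < k)%N by apply: leq_trans hk2.
have [u _ Hu] := @arg_minnP _ ((0 : F), (0 : F)) xpredT (Qf S) isT.
have T1 : (\sum_v Qf S v <= #|S| * (#|S| * k + k * k))%N.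
  have -> : (\sum_v Qf S v = \sum_(s in S) \sum_(s' in S) \sum_v ((dot2 s v == dot2 s' v) : nat))%N.
    rewrite (eq_bigr _ (fun v _ => Qf_pairs S v)) exchange_big /=.
    by apply: eq_bigr => s _; rewrite exchange_big.
  apply: leq_trans (_ : \sum_(s in S) \sum_(s' in S) (k + (s == s') * (k * k)) <= _)%N.
    by apply: leq_sum => s _; apply: leq_sum => s' _; rewrite -hF; exact: count_dir.
  rewrite -sum_nat_const; apply: leq_sum => s sS.
  rewrite big_split /= sum_nat_const -big_distrl /=.
  by rewrite (@sum_eqind _ (fun t => t \in S)) sS mul1n.
have T2 : (k * k * Qf S u <= \sum_v Qf S v)%N.
  apply: leq_trans (_ : \sum_(v : F * F) Qf S u <= _)%N.
    by rewrite sum_nat_const card_prod hF.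
  by apply: leq_sum => v _; exact: Hu.
have T3 : (k * Qf S u <= #|S| * #|S| + #|S| * k)%N.
  rewrite -(leq_pmul2l kpos); nia.
have SS : (#|S| <= k * k)%N by rewrite -hF -card_prod; exact: max_card.
exists u => Z hZ.
have splitZ : forall G : F -> nat, (\sum_t G t = \sum_(t in Z) G t + \sum_(t in ~: Z) G t)%N.
  move=> G; rewrite (bigID (fun t => t \in Z)) /=; congr (_ + _).
  by apply: eq_bigl => t; rewrite inE.
have hZc : #|~: Z| = h by rewrite cardsCs setCK hF hZ -/h; lia.
rewrite count_fib.
have sumS := sum_fib S u; rewrite splitZ in sumS.
have QS : Qf S u = (\sum_(t in Z) fib S u t ^ 2 + \sum_(t in ~: Z) fib S u t ^ 2)%N.
  by rewrite /Qf splitZ.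
rewrite QS in T3.
have csR : forall Y : {set F}, #|Y| = h ->
   ((\sum_(t in Y) fib S u t)%:R : R) ^+ 2 <= h%:R * (\sum_(t in Y) fib S u t ^ 2)%:R.
  move=> Y hY; have := @cs_set R F Y (fun t => (fib S u t)%:R : R).
  rewrite hY -natr_sum; under [X in _ <= _ * X]eq_bigr => i _ do rewrite -natrX.
  by rewrite -natr_sum.
have ha := csR Z hZ; have hb := csR _ hZc.
move: ha hb T3 sumS SS kh.
set A := (\sum_(t in Z) fib S u t)%N; set B := (\sum_(t in ~: Z) fib S u t)%N.
set q := (\sum_(t in Z) fib S u t ^ 2)%N; set r := (\sum_(t in ~: Z) fib S u t ^ 2)%N.
move=> ha hb T3 sumS SS kh.
have e1 : (A%:R + B%:R : R) = #|S|%:R by rewrite -natrD sumS.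
have e2 : (k%:R * (q%:R + r%:R) : R) <= #|S|%:R * #|S|%:R + #|S|%:R * k%:R.
  by rewrite -natrD -!natrM -natrD ler_nat.
have e3 : (#|S|%:R : R) <= k%:R * k%:R by rewrite -natrM ler_nat.
have e4 : (k%:R : R) = h%:R * 2 by rewrite kh natrM.
have k0 : (0 : R) <= k%:R by [].
have sq := sqr_sqrtr k0.
move: ha hb e1 e2 e3 e4 k0 sq.
move: (A%:R : R) (B%:R : R) (q%:R : R) (r%:R : R) (h%:R : R) (#|S|%:R : R) (k%:R : R).
move=> a b qq rr hh n kk ha hb e1 e2 e3 e4 k0 sq.
set y := Num.sqrt kk.
have y0 : 0 <= y by exact: sqrtr_ge0.
have d1 : (a - b) ^+ 2 <= n * kk by rewrite e4 in e2; nra.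
have d2 : n * kk <= kk * kk * kk by nra.
have d3 : (a - b) ^+ 2 <= (kk * y) ^+ 2 by rewrite exprMn sq; nra.
have z0 : 0 <= kk * y by exact: mulr_ge0.
move: d3 z0; set z := kk * y => d3 z0.
have d4 : a - b <= z by rewrite !expr2 in d3; nra.
lra.
Qed.
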